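(* Let $T>0$, $\rho>0$, and let $a,b:[0,\infty)\to[0,\infty)$ and $\mathfrak n$ satisfy: $a,b\in\mathcal C^0([0,\infty))\cap\mathcal C^1(0,\infty)$; $a',b'$ bounded on $(1,\infty)$; $a(x)>0$ for $x>0$ and $1/a\in L^1(0,1)$; $\Phi:=b/a$ has a limit $\Phi_0$ at $0^+$ with $\Phi_0<\rho$ and $\Phi'\in L^1(0,1)$; $\mathfrak n$ is nonnegative and continuous on $[\Phi_0,\infty)$. Let $u^{\rm in}\in(\Phi_0,\rho]$ and $\delta>0$ with $2\delta<u^{\rm in}-\Phi_0$, and let $\mathcal B_\delta([0,T))$ be the set of continuous $u:[0,T)\to[0,\rho]$ with $u(0)=u^{\rm in}$ and $\Phi_0+\delta\le u(t)\le\rho$ for all $t\in[0,T)$. For $u\in\mathcal B_\delta([0,T))$ and $x>0$, let $s\mapsto X(s;0,x)$ denote the solution on $[0,T)$ of $\partial_sX(s;0,x)=a(X(s;0,x))u(s)-b(X(s;0,x))$, $X(0;0,x)=x$. Let $\{u^n\}\subset\mathcal B_\delta([0,T))$ converge uniformly to $u$, with corresponding characteristics $X^n$. Then for each $x>0$, $X^n(\cdot;0,x)$ converges uniformly to $X(\cdot;0,x)$ on $[0,T)$ as $n\to\infty$.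
   Context: For such $u$ the characteristic $X(\cdot;0,x)$ exists, is unique and stays in $(0,\infty)$ on the whole interval $[0,T)$. *)

(* Defs.v *)
From HB Require Import structures.
From mathcomp Require Import all_boot all_order all_algebra.
From mathcomp Require Import all_classical all_reals all_analysis.
Set Implicit Arguments. Unset Strict Implicit. Unset Printing Implicit Defensive.
Import Order.TTheory GRing.Theory Num.Theory.
Import numFieldNormedType.Exports.
Local Open Scope classical_set_scope.
Local Open Scope ring_scope.

Definition unif_cvg_on {R : realType} (D : set R) (fn : nat -> R -> R) (f : R -> R) : Prop :=
  forall eps : R, 0 < eps -> exists N : nat, forall n : nat, (N <= n)%N ->
    forall s, D s -> `|fn n s - f s| < eps.

Definition in_Bdelta {R : realType} (T rho Phi0 delta uin : R) (u : R -> R) : Prop :=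
  {within [set t | 0 <= t < T], continuous u} /\
  u 0 = uin /\
  (forall t, 0 <= t < T -> 0 <= u t <= rho) /\
  (forall t, 0 <= t < T -> Phi0 + delta <= u t <= rho).

Definition characteristic {R : realType} (a b u : R -> R) (T x : R) (X : R -> R) : Prop :=
  X 0 = x /\
  {within [set s | 0 <= s < T], continuous X} /\
  (forall s, 0 <= s < T -> 0 <= X s) /\
  (forall s, 0 < s < T -> derivable X s 1 /\ derive1 X s = a (X s) * u s - b (X s)).

(* Main.v *)
Require Import Defs.
From HB Require Import structures.
From mathcomp Require Import all_boot all_order all_algebra.
From mathcomp Require Import all_classical all_reals all_analysis.
From mathcomp Require Import ring lra.
Import Order.TTheory GRing.Theory Num.Theory.
Import numFieldNormedType.Exports.
Local Open Scope classical_set_scope.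
Local Open Scope ring_scope.
Lemma cont_ind (R : realType) (T : R) (Q : R -> Prop) :
  (forall sg, 0 <= sg < T -> (forall r, 0 <= r < sg -> Q r) ->
     exists2 eta, 0 < eta & forall r, sg <= r < sg + eta -> r < T -> Q r) ->
  forall r, 0 <= r < T -> Q r.
Proof.
move=> H r /andP[r0 rT].
have T0 : 0 < T by exact: le_lt_trans r0 rT.
pose S := [set s | 0 <= s <= T /\ forall r, 0 <= r < s -> Q r].
have S0 : S 0.
  split; first by rewrite lexx ltW.
  by move=> q /andP[q0 q1]; move: (le_lt_trans q0 q1); rewrite ltxx.
have ubS : ubound S T by move=> s [/andP[_ ->]].
have hsup : has_sup S by split; [exists 0 | exists T].
pose sg := sup S.
have Qall : forall q, 0 <= q < sg -> Q q.
  move=> q /andP[q0 qs].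
  have [e [_ Qe] lte] := @sup_adherent _ S (sg - q) ltac:(by rewrite subr_gt0) hsup.
  apply: Qe; rewrite q0 /=.
  by move: lte; rewrite opprB addrCA subrr addr0.
have sg0 : 0 <= sg by apply: ub_le_sup => //; exists T.
have sgT : sg <= T by apply: ge_sup => //; exists 0.
have [sgltT|] := ltP sg T; last first.
  by move=> Tsg; apply: Qall; rewrite r0 (lt_le_trans rT Tsg).
have [eta eta0 Heta] := H sg ltac:(by rewrite sg0 sgltT) Qall.
pose s' := Num.min (sg + eta / 2) T.
have Ss' : S s'.
  split.
    rewrite ge_min lexx orbT andbT le_min (ltW T0) andbT.
    by rewrite addr_ge0 // divr_ge0 // ltW.
  move=> q /andP[q0 qs']; have [qsg|sgq] := ltP q sg; first by apply: Qall; rewrite q0.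
  move: qs'; rewrite lt_min => /andP[q1 q2]; apply: Heta => //.
  rewrite sgq /=; lra.
have : s' <= sg by apply: ub_le_sup => //; exists T.
rewrite ge_min => /orP[|]; last by rewrite leNgt sgltT.
lra.
Qed.
Lemma within_cont_eps (R : realType) (A : set R) (f : R -> R) (x : R) :
  {within A, continuous f} -> A x -> forall eps : R, 0 < eps ->
  exists2 eta : R, 0 < eta & forall r, A r -> `|x - r| < eta -> `|f x - f r| < eps.
Proof.
move=> cf Ax eps e0.
have := (@subspace_continuousP _ A _ f).1 cf x Ax.
move/cvgrPdist_lt => /(_ eps e0) /nbhs_ballP [eta eta0 H].
exists eta => // r Ar xr; apply: H => //.
Qed.

Lemma right_lim_eps (R : realType) (f : R -> R) (l : R) :
  f x @[x --> 0^'+] --> l -> forall eps : R, 0 < eps ->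
  exists2 eta : R, 0 < eta & forall r, 0 < r < eta -> `|l - f r| < eps.
Proof.
move=> cf eps e0.
move/cvgrPdist_lt : cf => /(_ eps e0) /nbhs_ballP [eta eta0 H].
exists eta => // r /andP[r0 re]; apply: H => //.
by rewrite -ball_normE /ball_ /= sub0r normrN gtr0_norm.
Qed.

Lemma lower_bound (R : realType) (Y : R -> R) (T x m eps : R) :
  0 < m -> m <= x -> m < eps ->
  (forall r, 0 < r < T -> 0 < Y r < eps -> 0 < derive1 Y r) ->
  Y 0 = x -> {within [set s | 0 <= s < T], continuous Y} ->
  (forall s, 0 < s < T -> derivable Y s 1) ->
  forall s, 0 <= s < T -> m <= Y s.
Proof.
move=> m0 mx meps Hpos Y0 cY dY.
apply: cont_ind => sg /andP[sg0 sgT] IH.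
have Ysg : m <= Y sg.
  have [->|sgpos] : sg = 0 \/ 0 < sg.
    by move: sg0; rewrite le_eqVlt => /orP[/eqP<-|->]; [left|right].
    by rewrite Y0.
  rewrite leNgt; apply/negP => Ylt.
  have [eta eta0 Heta] := @within_cont_eps _ _ Y sg cY ltac:(by rewrite /= sg0 sgT) (m - Y sg) ltac:(by rewrite subr_gt0).
  pose r := sg - Num.min sg eta / 2.
  have mpos : 0 < Num.min sg eta by rewrite lt_min sgpos eta0.
  have ms : Num.min sg eta <= sg by rewrite ge_min lexx.
  have me : Num.min sg eta <= eta by rewrite ge_min lexx orbT.
  have r0 : 0 <= r by rewrite /r; lra.
  have rsg : r < sg by rewrite /r; lra.
  have := IH r ltac:(by rewrite r0 rsg).
  have := Heta r ltac:(by rewrite /= r0 (lt_trans rsg sgT)) ltac:(by rewrite /r opprB addrC subrK gtr0_norm; lra).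
  move=> h1 h2; have := ler_norm (Y r - Y sg); rewrite distrC; lra.
have [Ybig|Ysmall] := leP eps (Y sg).
  have [eta eta0 Heta] := @within_cont_eps _ _ Y sg cY ltac:(by rewrite /= sg0 sgT) (Y sg - m) ltac:(by rewrite subr_gt0; lra).
  exists eta => // r /andP[r1 r2] rT.
  have := Heta r ltac:(by rewrite /= rT andbT; lra) ltac:(by rewrite distrC ger0_norm; lra).
  have := ler_norm (Y sg - Y r). lra.
have [eta eta0 Heta] := @within_cont_eps _ _ Y sg cY ltac:(by rewrite /= sg0 sgT) (Num.min (eps - Y sg) (Y sg)) ltac:(by rewrite lt_min subr_gt0 Ysmall; lra).
exists eta => // r /andP[r1 r2] rT.
suff : Y sg <= Y r by lra.
apply: (@ger0_derive1_ndecr _ Y sg r) => //; last first.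
- apply: continuous_subspaceW cY => z /=; rewrite in_itv /= => /andP[z1 z2].
  by rewrite (le_trans sg0 z1) (le_lt_trans z2 rT).
- move=> z; rewrite in_itv /= => /andP[z1 z2]; apply: ltW; apply: Hpos.
    by rewrite (le_lt_trans sg0 z1) (lt_trans z2 rT).
  have := Heta z ltac:(by rewrite /= (le_trans sg0 (ltW z1)) (lt_trans z2 rT)) ltac:(by rewrite distrC ger0_norm; lra).
  rewrite lt_min => /andP[h1 h2]; have := ler_norm (Y sg - Y z); have := ler_norm (Y z - Y sg).
  rewrite distrC; lra.
- move=> z; rewrite in_itv /= => /andP[z1 z2]; apply: dY.
  by rewrite (le_lt_trans sg0 z1) (lt_trans z2 rT).
Qed.
Lemma gronwall (R : realType) (f : R -> R) (T g c : R) : 0 < g ->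
  {within [set s | 0 <= s < T], continuous f} ->
  (forall s, 0 < s < T -> derivable f s 1 /\ derive1 f s <= g * f s + g * c) ->
  forall s, 0 <= s < T -> f s + c <= (f 0 + c) * expR (g * s).
Proof.
move=> g0 cf Hd s /andP[s0 sT].
have [s00|spos] : s = 0 \/ 0 < s.
  by move: s0; rewrite le_eqVlt => /orP[/eqP->|->]; [left|right].
  by rewrite s00 mulr0 expR0 mulr1.
pose e := expR \o (fun r => - (g * r)).
pose h : R -> R := (fun r => e r * (f r + c)).
have He : forall r : R, is_derive r (1:R) e (expR (- (g * r)) * (- g)).
  move=> r; apply: is_derive1_comp.
  apply: is_derive_eq.
  by rewrite [_%:A]mulr1.
have Hh : forall r : R, 0 < r < T -> is_derive r (1:R) h
    (e r * (derive1 f r - g * (f r + c))).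
  move=> r rT; have [df _] := Hd r rT.
  have Hf : is_derive r (1:R) f (derive1 f r) by rewrite derive1E; exact: derivableP.
  have Hf2 : is_derive r (1:R) (fun r => f r + c) (derive1 f r).
    by apply: is_derive_eq; rewrite addr0.
  have := is_deriveM (He r) Hf2.
  move=> H; have -> : h = (e * (fun r0 => f r0 + c)) by apply/funext => y.
  apply: (is_derive_eq H).
  rewrite /GRing.scale /= /e /=; ring.
have cs : {within `[0, s], continuous h}.
  have cf' : {within `[0, s], continuous f}.
    apply: continuous_subspaceW cf => y /=; rewrite in_itv /= => /andP[y0 ys].
    by rewrite y0 (le_lt_trans ys sT).
  move=> y; apply: continuousM.
    apply: continuous_subspaceT => z; rewrite /e.
    apply: continuous_comp; last exact: continuous_expR.
    by apply: continuousN; apply: continuousM; [exact: cst_continuous|exact: (fun y => cvg_id)].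
  by apply: continuousD; [exact: cf'|exact: cst_continuous].
have [z zs hz] := @MVT R h (fun r => e r * (derive1 f r - g * (f r + c))) 0 s spos
   (fun z zs => Hh z ltac:(move: zs; rewrite in_itv /= => /andP[z0 zs]; by rewrite z0 (lt_trans zs sT))) cs.
move: zs; rewrite in_itv /= => /andP[z0 zs].
have [_ dz] := Hd z ltac:(by rewrite z0 (lt_trans zs sT)).
have ez : 0 < e z by rewrite /e /= expR_gt0.
have hle : h s <= h 0.
  by rewrite -subr_le0 hz subr0 (pmulr_lle0 _ spos) (pmulr_rle0 _ ez) subr_le0 mulrDr.
move: hle; rewrite /h /e /= mulr0 oppr0 expR0 mul1r => hle.
have E : expR (- (g * s)) * expR (g * s) = 1 by rewrite expRN mulVf // gt_eqF // expR_gt0.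
rewrite -[f s + c]mul1r -E mulrAC.
by rewrite ler_pM2r ?expR_gt0.
Qed.

Lemma lip_C1 (R : realType) (f : R -> R) (p q : R) : 0 < p -> p <= q ->
  (forall y, 0 < y -> derivable f y 1) -> {in [set y | 0 < y], continuous (derive1 f)} ->
  exists L : R, 0 <= L /\ forall y z, p <= y <= q -> p <= z <= q -> `|f y - f z| <= L * `|y - z|.
Proof.
move=> p0 pq df cdf.
have cn : {within `[p, q], continuous (fun y => `|derive1 f y|)}.
  apply: continuous_in_subspaceT => y; rewrite inE /= in_itv /= => /andP[y1 y2].
  apply: continuous_comp; last exact: norm_continuous.
  by apply: cdf; rewrite inE /=; lra.
have [c cI Hc] := EVT_max pq cn.
exists `|derive1 f c|; split => // y z /andP[y1 y2] /andP[z1 z2].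
wlog yz : y z y1 y2 z1 z2 / y <= z.
  move=> H; have [yz|zy] := leP y z; first exact: H.
  rewrite distrC (distrC y); apply: H => //; exact: ltW.
have [w wI Hw] := @MVT_segment R f (derive1 f) y z yz
  ltac:(move=> w; rewrite in_itv /= => /andP[w1 w2]; rewrite derive1E; apply: derivableP; apply: df; lra)
  ltac:(apply: derivable_within_continuous => w; rewrite in_itv /= => /andP[w1 w2]; apply: df; lra).
rewrite distrC Hw normrM distrC; apply: ler_wpM2r => //.
by apply: Hc; move: wI; rewrite !in_itv /= => /andP[w1 w2]; apply/andP; split; lra.
Qed.

Lemma growth (R : realType) (f : R -> R) (Mf : R) :
  (forall y, 0 <= y -> 0 <= f y) -> {within [set y | 0 <= y], continuous f} ->
  (forall y, 0 < y -> derivable f y 1) -> (forall y, 1 < y -> `|derive1 f y| <= Mf) ->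
  exists C M : R, [/\ 0 <= C, 0 < M & forall y, 0 <= y -> f y <= C + M * y].
Proof.
move=> f0 cf df hM.
have sub : [set` `[(0:R), 1]] `<=` [set y : R | 0 <= y].
  by move=> y /=; rewrite in_itv /= => /andP[].
have [c cI Hc] := @EVT_max R f 0 1 ler01 (continuous_subspaceW sub cf).
have c0 : 0 <= c by move: cI; rewrite in_itv /= => /andP[].
have M0 : 0 < Num.max Mf 1 by rewrite lt_max ltr01 orbT.
have MM : Mf <= Num.max Mf 1 by rewrite le_max lexx.
exists (f c), (Num.max Mf 1); split => //; first exact: f0.
move=> y y0; have [y1|y1] := leP y 1.
  have := Hc y ltac:(by rewrite in_itv /= y0 y1).
  have : 0 <= Num.max Mf 1 * y by rewrite mulr_ge0 // ltW.
  lra.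
have [w wI Hw] := @MVT R f (derive1 f) 1 y y1
  ltac:(move=> w; rewrite in_itv /= => /andP[w1 w2]; rewrite derive1E; apply: derivableP; apply: df; lra)
  ltac:(apply: derivable_within_continuous => w; rewrite in_itv /= => /andP[w1 w2]; apply: df; lra).
move: wI; rewrite in_itv /= => /andP[w1 w2].
have h1 := Hc 1 ltac:(by rewrite in_itv /= ler01 lexx).
have h2 : derive1 f w <= Num.max Mf 1 := le_trans (ler_norm _) (le_trans (hM w w1) MM).
have h3 : derive1 f w * (y - 1) <= Num.max Mf 1 * (y - 1) by apply: ler_wpM2r => //; lra.
have h4 : 0 <= Num.max Mf 1 by exact: ltW.
nra.
Qed.

Lemma alg_bound (R : realType) (d Da Db aX un w eta La Lb A rho : R) :
  `|Da| <= La * `|d| -> `|Db| <= Lb * `|d| -> 0 <= un <= rho -> `|aX| <= A ->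
  `|w| <= eta -> 0 <= La -> 0 <= Lb ->
  2 * d * (Da * un + aX * w - Db) <=
    (2 * La * rho + 2 * Lb + A) * (d * d) + A * (eta * eta).
Proof.
move=> hDa hDb /andP[un0 unr] haX hw La0 Lb0.
have dd : `|d| * `|d| = d * d by rewrite -normrM ger0_norm // -expr2 sqr_ge0.
have nd := normr_ge0 d.
have t1 : d * (Da * un) <= La * rho * (d * d).
  apply: (le_trans (ler_norm _)); rewrite !normrM (ger0_norm un0) -dd.
  have : `|d| * `|Da| <= `|d| * (La * `|d|) by apply: ler_wpM2l.
  move=> h; have := ler_wpM2r un0 h.
  have : `|d| * (La * `|d|) * un <= `|d| * (La * `|d|) * rho.
    by apply: ler_wpM2l => //; rewrite mulr_ge0 // mulr_ge0.
  move=> h1 h2; rewrite mulrA; apply: (le_trans h2); apply: (le_trans h1).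
  by rewrite le_eqVlt; apply/orP; left; apply/eqP; ring.
have t2 : - (d * Db) <= Lb * (d * d).
  apply: (le_trans (ler_norm _)); rewrite normrN normrM -dd.
  have : `|d| * `|Db| <= `|d| * (Lb * `|d|) by apply: ler_wpM2l.
  move=> h; apply: (le_trans h).
  by rewrite le_eqVlt; apply/orP; left; apply/eqP; ring.
have t3 : d * (aX * w) <= A * (`|d| * eta).
  apply: (le_trans (ler_norm _)); rewrite !normrM.
  have A0 : 0 <= A := le_trans (normr_ge0 _) haX.
  have : `|aX| * `|w| <= A * eta.
    apply: (le_trans (ler_wpM2l (normr_ge0 _) hw)); apply: ler_wpM2r => //.
    exact: le_trans (normr_ge0 _) hw.
  move=> h; have := ler_wpM2l nd h.
  move=> h'; apply: (le_trans h').
  by rewrite le_eqVlt; apply/orP; left; apply/eqP; ring.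
have A0 : 0 <= A := le_trans (normr_ge0 _) haX.
have t4 : 2 * (`|d| * eta) <= d * d + eta * eta.
  rewrite -dd; have := sqr_ge0 (`|d| - eta); rewrite expr2; nra.
have t5 : A * (2 * (`|d| * eta)) <= A * (d * d + eta * eta) by apply: ler_wpM2l.
nra.
Qed.
Lemma within_contD2 (R : realType) (T : R) (f g : R -> R) :
  {within [set s | 0 <= s < T], continuous f} ->
  {within [set s | 0 <= s < T], continuous g} ->
  {within [set s | 0 <= s < T], continuous (fun r => (f r - g r) * (f r - g r))}.
Proof.
move=> cf cg.
apply/subspace_continuousP => y Ay.
have hf := (@subspace_continuousP _ _ _ f).1 cf y Ay.
have hg := (@subspace_continuousP _ _ _ g).1 cg y Ay.
by apply: cvgM; apply: cvgB.
Qed.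

Theorem mainTheorem6 (R : realType) (T rho : R) (a b nfrak : R -> R)
  (Phi0 uin delta : R) (u : R -> R) (un : nat -> R -> R)
  (X : R -> R -> R) (Xn : nat -> R -> R -> R) :
  0 < T -> 0 < rho ->
  (* a, b : [0,oo) -> [0,oo) *)
  (forall x, 0 <= x -> 0 <= a x) -> (forall x, 0 <= x -> 0 <= b x) ->
  (* C^0([0,oo)) *)
  {within [set x | 0 <= x], continuous a} ->
  {within [set x | 0 <= x], continuous b} ->
  (* C^1(0,oo) *)
  (forall x, 0 < x -> derivable a x 1) -> {in [set x | 0 < x], continuous (derive1 a)} ->
  (forall x, 0 < x -> derivable b x 1) -> {in [set x | 0 < x], continuous (derive1 b)} ->
  (* a', b' bounded on (1,oo) *)
  (exists M : R, forall x, 1 < x -> `|derive1 a x| <= M) ->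
  (exists M : R, forall x, 1 < x -> `|derive1 b x| <= M) ->
  (* a > 0 on (0,oo), 1/a in L^1(0,1) *)
  (forall x, 0 < x -> 0 < a x) ->
  (lebesgue_measure).-integrable [set x : R | 0 < x < 1] (fun x => ((a x)^-1)%:E) ->
  (* Phi = b/a : limit Phi0 at 0+, Phi0 < rho, Phi' in L^1(0,1) *)
  (fun x => b x / a x) x @[x --> 0^'+] --> Phi0 ->
  Phi0 < rho ->
  (lebesgue_measure).-integrable [set x : R | 0 < x < 1]
     (fun x => (derive1 (fun y => b y / a y) x)%:E) ->
  (* nfrak nonnegative and continuous on [Phi0,oo) *)
  (forall x, Phi0 <= x -> 0 <= nfrak x) ->
  {within [set x | Phi0 <= x], continuous nfrak} ->
  (* u^in and delta *)
  Phi0 < uin -> uin <= rho -> 0 < delta -> 2 * delta < uin - Phi0 ->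
  (* u^n in B_delta, u^n -> u uniformly on [0,T) *)
  (forall n, in_Bdelta T rho Phi0 delta uin (un n)) ->
  in_Bdelta T rho Phi0 delta uin u ->
  unif_cvg_on [set t | 0 <= t < T] un u ->
  (* corresponding characteristics *)
  (forall x, 0 < x -> characteristic a b u T x (X x)) ->
  (forall n x, 0 < x -> characteristic a b (un n) T x (Xn n x)) ->
  forall x, 0 < x -> unif_cvg_on [set s | 0 <= s < T] (fun n => Xn n x) (X x).
Proof.
move=> hT hrho ha0 hb0 ca cb da dca db dcb [Ma hMa] [Mb hMb] apos _ hPhi hPhirho _ _ _
  huin1 huin2 hdelta hdelta2 hBn hB hunif hX hXn x x0.
have [ep ep0 Hep] := @right_lim_eps R _ _ hPhi delta hdelta.
pose m := Num.min x (ep / 2).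
have m0 : 0 < m by rewrite lt_min x0 divr_gt0.
have mx : m <= x by rewrite ge_min lexx.
have mep : m < ep by rewrite /m gt_min; apply/orP; right; lra.
have pos : forall v, in_Bdelta T rho Phi0 delta uin v ->
    forall r y, 0 <= r < T -> 0 < y < ep -> 0 < a y * v r - b y.
  move=> v [_ [_ [_ hv]]] r y rT yI.
  have /andP[hv1 _] := hv r rT.
  have := Hep y yI; have := ler_norm (b y / a y - Phi0); rewrite distrC => h1 h2.
  have ay : 0 < a y by apply: apos; case/andP: yI.
  rewrite subr_gt0 mulrC -ltr_pdivrMr //; lra.
have lowb : forall v Y, in_Bdelta T rho Phi0 delta uin v ->
    characteristic a b v T x Y -> forall s, 0 <= s < T -> m <= Y s.
  move=> v Y hv [Y0 [cY [Yge0 dY]]].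
  apply: (@lower_bound R Y T x m ep m0 mx mep) => //; last first.
    by move=> s sI; case: (dY s sI).
  move=> r rI yI; rewrite (dY r rI).2; apply: pos => //.
  by case/andP: rI => r0 rT; rewrite ltW.
have [C [M [C0 M0 hCM]]] := @growth R a Ma ha0 ca da hMa.
pose K := (x + C / M) * expR (rho * M * T).
have CM0 : 0 <= C / M by rewrite divr_ge0 // ltW.
have upb : forall v Y, in_Bdelta T rho Phi0 delta uin v ->
    characteristic a b v T x Y -> forall s, 0 <= s < T -> Y s <= K.
  move=> v Y [_ [_ [hv _]]] [Y0 [cY [Yge0 dY]]] s sI.
  have g0 : 0 < rho * M by rewrite mulr_gt0.
  have hd : forall r, 0 < r < T -> derivable Y r 1 /\
      derive1 Y r <= rho * M * Y r + rho * M * (C / M).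
    move=> r rI; have [dr er] := dY r rI; split => //.
    have r0 : 0 <= r < T by case/andP: rI => r0 rT; rewrite ltW.
    have /andP[v0 vr] := hv r r0.
    have Yr0 := Yge0 r r0.
    have aY0 := ha0 _ Yr0; have bY0 := hb0 _ Yr0.
    have h1 : a (Y r) * v r <= a (Y r) * rho by apply: ler_wpM2l.
    have h2 : a (Y r) * rho <= (C + M * Y r) * rho by apply: ler_wpM2r; [exact: ltW|exact: hCM].
    have h3 : rho * M * (C / M) = rho * C by field; rewrite gt_eqF.
    rewrite er h3; lra.
  have H := @gronwall R Y T (rho * M) (C / M) g0 cY hd s sI.
  rewrite Y0 in H.
  have : Y s + C / M <= (x + C / M) * expR (rho * M * T).
    apply: (le_trans H); apply: ler_wpM2l; first lra.
    rewrite ler_expR; apply: ler_wpM2l; [exact: ltW|].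
    by case/andP: sI => _ /ltW.
  rewrite -/K; lra.
pose q := Num.max m K.
have mq : m <= q by rewrite le_max lexx.
have [La [La0 hLa]] := @lip_C1 R a m q m0 mq da dca.
have [Lb [Lb0 hLb]] := @lip_C1 R b m q m0 mq db dcb.
pose A := C + M * q.
have q0 : 0 <= q := le_trans (ltW m0) mq.
have A0 : 0 <= A by rewrite addr_ge0 // mulr_ge0 // ltW.
pose g := 2 * La * rho + 2 * Lb + A + 1.
have g0 : 0 < g.
  have : 0 <= La * rho by rewrite mulr_ge0 // ltW.
  rewrite /g; lra.
move=> eps eps0.
pose E := expR (g * T).
have E0 : 0 < E by exact: expR_gt0.
pose eta := eps / (E + 1).
have eta0 : 0 < eta by rewrite divr_gt0 //; lra.
have [N HN] := hunif eta eta0.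
exists N => n nN s sI.
have [Xn0 [cXn [Xnge0 dXn]]] := hXn n x x0.
have [X0 [cX [Xge0 dX]]] := hX x x0.
pose D : R -> R := fun r : R => (Xn n x r - X x r) * (Xn n x r - X x r).
have cD : {within [set s | 0 <= s < T], continuous D}.
  exact: within_contD2.
have HD : forall r, 0 < r < T -> derivable D r 1 /\
    derive1 D r <= g * D r + g * (eta * eta).
  move=> r rI; have [dn en] := dXn r rI; have [dx ex] := dX r rI.
  have Hn : is_derive r (1:R) (Xn n x) (derive1 (Xn n x) r) by rewrite derive1E; exact: derivableP.
  have Hx : is_derive r (1:R) (X x) (derive1 (X x) r) by rewrite derive1E; exact: derivableP.
  have HDr := is_deriveM (is_deriveB Hn Hx) (is_deriveB Hn Hx).
  have HD2 : is_derive r (1:R) D (2 * (Xn n x r - X x r) *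
      (derive1 (Xn n x) r - derive1 (X x) r)).
    have -> : D = ((Xn n x - X x) * (Xn n x - X x)) by apply/funext.
    apply: (is_derive_eq HDr); rewrite /GRing.scale /= !fctE. ring.
  split; first by case: HD2.
  rewrite derive1E derive_val en ex.
  have r0 : 0 <= r < T by case/andP: rI => r0 rT; rewrite ltW.
  have hq : forall v Y, in_Bdelta T rho Phi0 delta uin v ->
      characteristic a b v T x Y -> m <= Y r <= q.
    move=> v Y hv hY; rewrite (lowb v Y hv hY r r0) /=.
    by rewrite le_max (upb v Y hv hY r r0) orbT.
  have qn := hq _ _ (hBn n) (hXn n x x0).
  have qx := hq _ _ hB (hX x x0).
  have hDa := hLa _ _ qn qx.
  have hDb := hLb _ _ qn qx.
  have [_ [_ [hv _]]] := hBn n.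
  have unI := hv r r0.
  have Xr0 : 0 <= X x r by apply: Xge0.
  have haX : `|a (X x r)| <= A.
    rewrite ger0_norm; last exact: ha0.
    apply: (le_trans (hCM _ Xr0)); rewrite lerD2l; apply: ler_wpM2l; [exact: ltW|].
    by case/andP: qx.
  have hw : `|un n r - u r| <= eta.
    by apply: ltW; apply: HN.
  have := @alg_bound R (Xn n x r - X x r) (a (Xn n x r) - a (X x r)) (b (Xn n x r) - b (X x r))
    (a (X x r)) (un n r) (un n r - u r) eta La Lb A rho hDa hDb unI haX hw La0 Lb0.
  have -> : a (Xn n x r) * un n r - b (Xn n x r) - (a (X x r) * u r - b (X x r)) =
    (a (Xn n x r) - a (X x r)) * un n r + a (X x r) * (un n r - u r) - (b (Xn n x r) - b (X x r)) by ring.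
  move=> H; apply: (le_trans H); rewrite /D /g.
  have : 0 <= (Xn n x r - X x r) * (Xn n x r - X x r) by rewrite -expr2 sqr_ge0.
  have : 0 <= (2 * La * rho + 2 * Lb + 1) * (eta * eta).
    have t1 : 0 <= 2 * La * rho + 2 * Lb + 1 by have := mulr_ge0 La0 (ltW hrho); lra.
    by rewrite mulr_ge0 // mulr_ge0 // ltW.
  lra.
have := @gronwall R D T g (eta * eta) g0 cD HD s sI.
have -> : D 0 = 0 by rewrite /D Xn0 X0 subrr mulr0.
rewrite add0r => H.
have hE : expR (g * s) <= E.
  rewrite ler_expR; apply: ler_wpM2l; [exact: ltW|]; by case/andP: sI => _ /ltW.
have hee : eta * (E + 1) = eps by rewrite /eta mulfVK // gt_eqF //; lra.
have H2 : D s <= eta * eta * E.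
  have : eta * eta * expR (g * s) <= eta * eta * E by apply: ler_wpM2l => //; rewrite mulr_ge0 // ltW.
  have : 0 <= eta * eta by rewrite mulr_ge0 // ltW.
  lra.
have H3 : eta * eta * E < eps * eps.
  rewrite -hee; nra.
have dd : `|Xn n x s - X x s| * `|Xn n x s - X x s| = D s
  by rewrite /D -normrM ger0_norm // -expr2 sqr_ge0.
rewrite ltNge; apply/negP => hc.
have := normr_ge0 (Xn n x s - X x s).
nra.
Qed.
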